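(* Let $A=(A_n(x))_{n\ge0}$ be an Appell sequence with exponential generating function $\sum_{k\ge0}A_k(x)t^k/k!=e^{xt}f_A(t)$, and write $\log f_A(t)=\sum_{k\ge1}c_k t^k/k!$. Let $\varphi_A:\Lambda\to\mathbb{R}[x]$ be the ring homomorphism with $\varphi_A(h_m)=A_m/m!$ for $m\ge1$. Then $\varphi_A(p_1)=x+c_1$ and $\varphi_A(p_n)=c_n/(n-1)!$ for all $n\ge2$.
   Context: An Appell sequence is a sequence of real polynomials $(A_n)_{n\ge0}$ with $A_0=1$ and $A_n'=nA_{n-1}$ for $n\ge1$; then $f_A(t)=\sum_k A_k(0)t^k/k!$ is a formal power series with $f_A(0)=1$. $\Lambda$ is the ring of symmetric functions, freely generated by the complete homogeneous symmetric functions $h_m$; $p_n=\sum_i x_i^n$ is the $n$-th power sum symmetric function. *)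

(* Defs.v *)
From HB Require Import structures.
From mathcomp Require Import all_boot all_order all_algebra.
From mathcomp Require Import mpoly.
Set Implicit Arguments. Unset Strict Implicit. Unset Printing Implicit Defensive.
Import Order.TTheory GRing.Theory Num.Theory.
Local Open Scope ring_scope.

Definition appell (R : realFieldType) (A : nat -> {poly R}) : Prop :=
  A 0%N = 1 /\ forall n : nat, (0 < n)%N -> (A n)^`() = (A n.-1) *+ n.

(* Truncation to degree <= K of f_A(t) = sum_k A_k(0) t^k / k!. *)
Definition fA_trunc (R : realFieldType) (A : nat -> {poly R}) (K : nat) : {poly R} :=
  \sum_(i < K.+1) ((A i).[0] / (i`!)%:R) *: 'X^i.

(* Truncation (exact up to degree K) of log f_A(t) = sum_{j>=1} (-1)^(j+1) (f_A - 1)^j / j;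
   since f_A(0) = 1, the terms with j > K only contribute in degree > K. *)
Definition logfA_trunc (R : realFieldType) (A : nat -> {poly R}) (K : nat) : {poly R} :=
  \sum_(j < K) (((-1) ^+ j) / (j.+1)%:R) *: (fA_trunc A K - 1) ^+ j.+1.

Definition appell_c (R : realFieldType) (A : nat -> {poly R}) (k : nat) : R :=
  (k`!)%:R * (logfA_trunc A k)`_k.

Definition hsym (N m : nat) : {mpoly int[N]} :=
  \sum_(mm : 'X_{1..N < m.+1} | mdeg mm == m) 'X_[mm].

Definition psum (N n : nat) : {mpoly int[N]} := \sum_(i < N) 'X_i ^+ n.

Definition sym_ring_hom (R : realFieldType) (N : nat) (phi : {mpoly int[N]} -> {poly R}) : Prop :=
  [/\ phi 1 = 1,
      forall p q, p \is symmetric -> q \is symmetric -> phi (p + q) = phi p + phi q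
    & forall p q, p \is symmetric -> q \is symmetric -> phi (p * q) = phi p * phi q].

(* Main.v *)
Require Import Defs.
From HB Require Import structures.
From mathcomp Require Import all_boot all_order all_algebra.
From mathcomp Require Import mpoly.
From mathcomp Require Import ring zify.
From mathcomp Require Import fingroup perm.
Import Order.TTheory GRing.Theory Num.Theory.
Local Open Scope ring_scope.

Lemma mcoeffXM_gen (n : nat) (u m : 'X_{1..n}) (p : {mpoly int[n]}) :
  ('X_[u] * p)@_m = if (u <= m)%MM then p@_(m - u) else 0.
Proof.
case: ifP => h.
  by rewrite -{1}(submK h) addmC -(commr_mpolyX u p) mcoeffMX.
rewrite {1}(mpolyE p) mulr_sumr raddf_sum big1 // => mm _.
rewrite /= -scalerAr -mpolyXD mcoeffZ mcoeffX.
case: eqP => [e|]; last by rewrite mulr0.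
have : (u <= m)%MM by rewrite -e; apply/mnm_lepP => i; rewrite mnmDE leq_addr.
by rewrite h.
Qed.

Lemma mcoeff_hsym N k m : (hsym N k)@_m = (mdeg m == k)%:R.
Proof.
rewrite /hsym raddf_sum /=.
under eq_bigr => mm _ do rewrite mcoeffX.
case: (boolP (mdeg m == k)) => hm.
  have hb : (mdeg m < k.+1)%N by rewrite (eqP hm).
  rewrite (bigD1 (BMultinom hb)) //= eqxx big1 ?addr0 // => mm /andP[_ ne].
  by move: ne; rewrite bmeqP /= => /negbTE ->.
rewrite big1 // => mm /eqP hmm; case: eqP => // e.
by rewrite -e hmm eqxx in hm.
Qed.

Lemma hsym0 N : hsym N 0 = 1.
Proof. by apply/mpolyP => m; rewrite mcoeff_hsym mcoeff1 mdeg_eq0. Qed.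

Lemma hsym_sym N k : hsym N k \is symmetric.
Proof.
by apply/issymP => s; apply/mpolyP => m; rewrite mcoeff_sym !mcoeff_hsym mdeg_mperm.
Qed.

Lemma psum_sym N k : psum N k \is symmetric.
Proof.
apply/issymP => s; rewrite /psum raddf_sum /=.
under eq_bigr => i _ do rewrite rmorphXn /= msymX.
rewrite (reindex_inj (@perm.perm_inj _ (s^-1)%g)) /=.
apply: eq_bigr => i _; congr (_ ^+ _); congr 'X_[_].
apply/mnmP => j; rewrite mnmE !mnm1E.
by rewrite -(inj_eq (@perm.perm_inj _ s)) !perm.permKV.
Qed.

Lemma mcoeff_XnH N (i : 'I_N) k j m :
  ('X_i ^+ k * hsym N j)@_m = ((k <= m i)%N && (mdeg m - k == j)%N)%:R.
Proof.
rewrite mpolyXn mcoeffXM_gen.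
have le : (U_(i) *+ k <= m)%MM = (k <= m i)%N.
  apply/mnm_lepP/idP => [/(_ i)|h j'].
    by rewrite mulmnE mnm1E eqxx mul1n.
  by rewrite mulmnE mnm1E; case: eqP => [<-|]; rewrite ?mul1n ?mul0n.
rewrite le; case: ifP => h //=.
have hs := submK (m := U_(i) *+ k) (m' := m); rewrite le in hs.
have := congr1 mdeg (hs h); rewrite mdegD mdegMn mdeg1 mul1n => <-.
by rewrite mcoeff_hsym addnK.
Qed.

Lemma count_min (n x : nat) : (\sum_(j < n) (n - j <= x)%N)%N = minn x n.
Proof.
elim: n => [|n IH]; first by rewrite big_ord0; lia.
rewrite big_ord_recl /= subn0.
under eq_bigr => j _ do rewrite /bump /= add1n subSS.
rewrite IH; lia.
Qed.

Lemma mdeg_ge N (m : 'X_{1..N}) i : (m i <= mdeg m)%N.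
Proof. by rewrite mdegE (bigD1 i) //= leq_addr. Qed.

Lemma newton_nat N (m : 'X_{1..N}) n :
  ((mdeg m == n) * n)%N =
  (\sum_(j < n) \sum_(i < N) ((n - j <= m i)%N && (mdeg m - (n - j) == j)%N))%N.
Proof.
case: (eqVneq (mdeg m) n) => hm.
  rewrite mul1n.
  have -> : (\sum_(j < n) \sum_(i < N) ((n - j <= m i)%N && (mdeg m - (n - j) == j)%N))%N
     = (\sum_(j < n) \sum_(i < N) (n - j <= m i)%N)%N.
    apply: eq_bigr => j _; apply: eq_bigr => i _.
    by rewrite hm subKn ?eqxx ?andbT // ltnW.
  rewrite exchange_big /=.
  under eq_bigr => i _ do rewrite count_min.
  rewrite -{1}hm mdegE; apply: eq_bigr => i _.
  have := @mdeg_ge _ m i; rewrite hm; lia.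
rewrite mul0n big1 // => j _; rewrite big1 // => i _.
case: andP => // -[h1 /eqP h2]; exfalso.
have := @mdeg_ge _ m i; have := ltn_ord j; move: hm => /eqP; lia.
Qed.

Lemma newton N n :
  hsym N n *+ n = \sum_(j < n) psum N (n - j) * hsym N j.
Proof.
apply/mpolyP => m; rewrite mcoeffMn mcoeff_hsym raddf_sum /=.
transitivity (\sum_(j < n) \sum_(i < N)
   (((n - j <= m i)%N && (mdeg m - (n - j) == j)%N)%:R : int)).
  have -> : ((mdeg m == n)%:R *+ n : int) = ((mdeg m == n) * n)%N%:R by rewrite natrM mulr_natr.
  by rewrite newton_nat natr_sum; apply: eq_bigr => j _; rewrite natr_sum.
apply: eq_bigr => j _; rewrite /psum mulr_suml raddf_sum /=.
by apply: eq_bigr => i _; rewrite mcoeff_XnH.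
Qed.

Section Analytic.
Variables (R : realFieldType) (A : nat -> {poly R}).
Hypothesis hA : appell A.

Definition aa k : R := (A k).[0] / (k`!)%:R.
Definition lc K i : R := (logfA_trunc A K)`_i.

Lemma aa0 : aa 0 = 1.
Proof. by rewrite /aa (proj1 hA) hornerC fact0 divr1. Qed.

Lemma coef_F K i : (fA_trunc A K)`_i = if (i <= K)%N then aa i else 0.
Proof. by rewrite /fA_trunc -(poly_def _ (fun i => aa i)) coef_poly ltnS. Qed.

Lemma S_K K k : (0 < k <= K)%N ->
  aa k *+ k = \sum_(j < k) aa j * (lc K (k - j) *+ (k - j)).
Proof.
case: k => // k /= hk.
set F := fA_trunc A K.
set G := F - 1.
set Q := \poly_(i < K) aa i.+1.
have GXQ : G = 'X * Q.
  apply/polyP => i; rewrite /G coefB coef1 coefXM coef_F coef_poly.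
  case: i => [|i] /=; first by rewrite aa0 subrr.
  by rewrite subr0.
have NZ j : (j.+1)%:R != 0 :> R by rewrite pnatr_eq0.
have dL : (logfA_trunc A K)^`() = G^`() * \sum_(j < K) (- G) ^+ j.
  have dsum (I : Type) (r : seq I) (P : pred I) (f : I -> {poly R}) :
    (\sum_(i <- r | P i) f i)^`() = \sum_(i <- r | P i) (f i)^`().
    by rewrite raddf_sum.
  rewrite /logfA_trunc dsum mulr_sumr; apply: eq_bigr => j _.
  rewrite derivZ deriv_exp /= -scaler_nat scalerA divfK // -/G [(- G) ^+ j]exprNn.
  have -> : (-1 : {poly R}) ^+ j = ((-1 : R) ^+ j)%:P by rewrite rmorphXn /= rmorphN1.
  by rewrite mul_polyC scalerAr.
have hS : (1 + G) * \sum_(j < K) (- G) ^+ j = 1 - (- G) ^+ K.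
  rewrite (_ : 1 + G = - (- G - 1)); last by ring.
  by rewrite mulNr -subrX1 opprB.
have FL : F * (logfA_trunc A K)^`() = F^`() - 'X^K * (G^`() * (-1) ^+ K * Q ^+ K).
  have -> : F = 1 + G by rewrite /G addrC subrK.
  rewrite dL mulrCA hS mulrBr mulr1.
  have -> : (1 + G)^`() = G^`() by rewrite derivD derivC add0r.
  congr (_ - _); set D := G^`(); rewrite GXQ.
  have E (T : comNzRingType) (d a x q : T) : d * (a * (x * q)) = x * (d * a * q) by ring.
  by rewrite [(- ('X * Q)) ^+ K]exprNn exprMn E.
have := congr1 (fun p : {poly R} => p`_k) FL => /=.
rewrite coefB coefXnM ifT //.
rewrite subr0 coef_deriv coef_F hk => <-.
rewrite coefM; apply: eq_bigr => j _.
rewrite coef_F ifT; last by have := ltn_ord j; lia.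
by rewrite coef_deriv subSn // -ltnS.
Qed.

Lemma lc_stab i K : (0 < i <= K)%N -> lc K i = lc i i.
Proof.
elim/ltn_ind: i K => i IH K /andP[i0 iK].
have h1 := S_K K i; have h2 := S_K i i.
have := etrans (esym (h1 ltac:(by rewrite i0 iK))) (h2 ltac:(by rewrite i0 leqnn)).
clear h1 h2.
case: i i0 iK IH => // i _ iK IH.
rewrite !big_ord_recl aa0 !mul1r subn0.
have -> : \sum_(j < i) aa (lift ord0 j) * (lc K (i.+1 - lift ord0 j) *+ (i.+1 - lift ord0 j))
  = \sum_(j < i) aa (lift ord0 j) * (lc i.+1 (i.+1 - lift ord0 j) *+ (i.+1 - lift ord0 j)).
  apply: eq_bigr => j _.
  have -> : (i.+1 - lift ord0 j = i - j)%N by rewrite /= /bump /= add1n subSS.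
  have hj := ltn_ord j.
  have lt1 : (i - j < i.+1)%N by rewrite ltnS leq_subr.
  have c1 : (0 < i - j <= K)%N by rewrite subn_gt0 hj (leq_trans (leq_subr j i) (ltnW iK)).
  have c2 : (0 < i - j <= i.+1)%N by rewrite subn_gt0 hj (leq_trans (leq_subr _ _) (leqnSn _)).
  by rewrite (IH _ lt1 K c1) (IH _ lt1 i.+1 c2).
move/addIr => e; apply: (@mulIf _ (i.+1)%:R); first by rewrite pnatr_eq0.
by rewrite !mulr_natr.
Qed.

Definition dd i : R := lc i i *+ i.

Lemma S_full k : (0 < k)%N -> aa k *+ k = \sum_(j < k) (dd (k - j)) * aa j.
Proof.
move=> k0; rewrite (S_K k k); last by rewrite k0 leqnn.
apply: eq_bigr => j _; rewrite mulrC /dd lc_stab //.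
by rewrite subn_gt0 ltn_ord leq_subr.
Qed.

Definition BB k : {poly R} := ((k`!)%:R)^-1 *: A k.

Lemma BB0 : BB 0 = 1.
Proof. by rewrite /BB (proj1 hA) fact0 invr1 scale1r. Qed.

Lemma BB_deriv n : (BB n.+1)^`() = BB n.
Proof.
rewrite /BB derivZ (proj2 hA) // -scaler_nat scalerA; congr (_ *: _).
rewrite factS natrM invfM mulrAC mulVf ?mul1r // pnatr_eq0 //.
Qed.

Lemma BB_horner k : (BB k).[0] = aa k.
Proof. by rewrite /BB hornerZ mulrC. Qed.

Lemma dsum (I : Type) (r : seq I) (P : pred I) (f : I -> {poly R}) :
  (\sum_(i <- r | P i) f i)^`() = \sum_(i <- r | P i) (f i)^`().
Proof. by rewrite raddf_sum. Qed.

Lemma eq_deriv (p q : {poly R}) : p^`() = q^`() -> p.[0] = q.[0] -> p = q.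
Proof.
move=> hd h0; apply/polyP => i; case: i => [|i]; first by rewrite -!horner_coef0.
have := congr1 (fun r : {poly R} => r`_i) hd => /=; rewrite !coef_deriv => e.
apply: (@mulIf _ (i.+1)%:R); first by rewrite pnatr_eq0.
by rewrite !mulr_natr.
Qed.

Lemma P_id n :
  BB n.+1 *+ n.+1 = 'X * BB n + \sum_(j < n.+1) (dd (n.+1 - j))%:P * BB j.
Proof.
elim: n => [|n IH]; apply: eq_deriv.
- rewrite derivMn derivD derivM derivX BB_deriv BB0 derivC mulr0 addr0 mul1r.
  by rewrite dsum big1 ?addr0 // => j _; rewrite derivM derivC mul0r add0r ord1 BB0 derivC mulr0.
- rewrite hornerMn hornerD mulrC hornerMX mulr0 add0r horner_sum BB_horner S_full //.
  by apply: eq_bigr => j _; rewrite hornerCM BB_horner.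
- rewrite derivMn derivD derivM derivX BB_deriv mul1r dsum big_ord_recl.
  rewrite derivM derivC mul0r add0r BB0 derivC mulr0 add0r.
  have -> : \sum_(i < n.+1) ((dd (n.+2 - lift ord0 i))%:P * BB (lift ord0 i))^`()
     = \sum_(i < n.+1) (dd (n.+1 - i))%:P * BB i.
    apply: eq_bigr => j _; rewrite derivM derivC mul0r add0r /= /bump /= add1n BB_deriv.
    by rewrite subSS.
  by rewrite BB_deriv -addrA -IH mulrS.
- rewrite hornerMn hornerD mulrC hornerMX mulr0 add0r horner_sum BB_horner S_full //.
  by apply: eq_bigr => j _; rewrite hornerCM BB_horner.
Qed.
End Analytic.
Arguments aa {R} A k.
Arguments lc {R} A K i.
Arguments dd {R} A i.
Arguments BB {R} A k.

Theorem proposition4p3 (R : realFieldType) (A : nat -> {poly R}) (N : nat)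
    (phi : {mpoly int[N]} -> {poly R}) :
  appell A ->
  sym_ring_hom phi ->
  (forall m : nat, (1 <= m <= N)%N -> phi (hsym N m) = ((m`!)%:R)^-1 *: A m) ->
  ((1 <= N)%N -> phi (psum N 1) = 'X + (appell_c A 1)%:P) /\
  (forall n : nat, (2 <= n <= N)%N ->
     phi (psum N n) = (appell_c A n / ((n.-1)`!)%:R)%:P).
Proof.
move=> hA [phi1 phiD phiM] hh.
have phi0 : phi 0 = 0.
  have := phiD 0 0 (rpred0 _) (rpred0 _); rewrite addr0.
  by move/(congr1 (fun x => x - phi 0)); rewrite subrr addrK => <-.
have phi_sum n (F : 'I_n -> {mpoly int[N]}) : (forall j, F j \is symmetric) ->
    phi (\sum_j F j) = \sum_j phi (F j).
  elim: n F => [|n IH] F hF; first by rewrite !big_ord0 phi0.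
  rewrite !big_ord_recr /= phiD ?IH //; apply: rpred_sum => j _; exact: hF.
have phiMn x k : x \is symmetric -> phi (x *+ k) = phi x *+ k.
  move=> hx; elim: k => [|k IH]; first by rewrite !mulr0n phi0.
  by rewrite !mulrS phiD ?rpredMn // IH.
have phiH j : (j <= N)%N -> phi (hsym N j) = BB A j.
  case: j => [|j] hj; first by rewrite hsym0 phi1 BB0.
  by rewrite hh.
pose D i := if i == 1%N then 'X + (dd A 1)%:P else (dd A i)%:P.
have P' n : BB A n.+1 *+ n.+1 = \sum_(j < n.+1) D (n.+1 - j)%N * BB A j.
  rewrite P_id // !big_ord_recr /= subSnn.
  have -> : \sum_(j < n) (dd A (n.+1 - widen_ord (leqnSn n) j))%:P * BB A (widen_ord (leqnSn n) j)
    = \sum_(j < n) D (n.+1 - widen_ord (leqnSn n) j)%N * BB A (widen_ord (leqnSn n) j).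
    apply: eq_bigr => j _; rewrite /D ifF //=.
    by rewrite subSn ?(ltnW (ltn_ord j)) // eqSS subn_eq0 leqNgt ltn_ord.
  by rewrite /D eqxx mulrDl addrCA.
have claim n : (0 < n <= N)%N -> phi (psum N n) = D n.
  elim/ltn_ind: n => n IH /andP[n0 nN].
  case: n n0 nN IH => // n _ nN IH.
  have := congr1 phi (newton N n.+1).
  rewrite phiMn ?hsym_sym // phiH // phi_sum; last first.
    by move=> j; rewrite rpredM ?psum_sym ?hsym_sym.
  have -> : \sum_(j < n.+1) phi (psum N (n.+1 - j) * hsym N j)
      = \sum_(j < n.+1) phi (psum N (n.+1 - j)) * BB A j.
    apply: eq_bigr => j _; rewrite phiM ?psum_sym ?hsym_sym // phiH //.
    exact: ltnW (leq_trans (ltn_ord j) nN).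
  rewrite P' => /esym.
  rewrite big_ord_recl [in X in _ = X]big_ord_recl /= (BB0 _ _ hA) !mulr1 subn0.
  have -> : \sum_(i < n) phi (psum N (n.+1 - bump 0 i)) * BB A (bump 0 i)
     = \sum_(i < n) D (n.+1 - bump 0 i)%N * BB A (bump 0 i).
    apply: eq_bigr => j _.
    have hj := ltn_ord j.
    have e : (n.+1 - bump 0 j = n - j)%N by rewrite /bump /= add1n subSS.
    have lt1 : (n - j < n.+1)%N by rewrite ltnS leq_subr.
    have c1 : (0 < n - j <= N)%N.
      by rewrite subn_gt0 hj (leq_trans (leq_subr j n) (ltnW nN)).
    by rewrite e (IH _ lt1 c1).
  by move/addIr.
split.
  move=> N1; rewrite claim ?N1 // /D eqxx; congr (_ + _%:P).
  by rewrite /appell_c /dd /lc /= mul1r.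
move=> n /andP[n2 nN]; rewrite claim; last by rewrite nN (ltnW n2).
rewrite /D ifF; last by case: n n2 {nN} => [|[|n]].
congr (_%:P); rewrite /appell_c /dd /lc.
case: n n2 nN => // n _ _ /=.
set l := (logfA_trunc A n.+1)`_n.+1.
have nz : (n`!)%:R != 0 :> R by rewrite pnatr_eq0 -lt0n fact_gt0.
rewrite factS natrM -mulr_natl; field; exact: nz.
Qed.
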